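(* Let $q,d\in\mathbb{N}$, $\mathcal J$ a partition of $[qd]$, $\mathcal K$ a partition of $[d]$, and $A$ a real $d$-tensor. Then \[ \|A\circ 1_{L(\mathcal K)}\|_{\mathcal J}\le 2^{|\mathcal K|(|\mathcal K|-1)/2}\|A\|_{\mathcal J}. \]
   Context: For $d$-tensors $A,B$ indexed by $[n]^d$, $A\circ B=(a_{\mathbf i}b_{\mathbf i})_{\mathbf i}$ is the Hadamard product; for $C\subseteq[n]^d$, $1_C$ is the $d$-tensor with entries $1$ on $C$ and $0$ elsewhere. For $\mathcal K=\{K_1,\dots,K_a\}$ a partition of $[d]$, $L(\mathcal K)=\{\mathbf i\in[n]^d: i_k=i_l\iff \exists j: k,l\in K_j\}$. For an $m$-tensor $B$ and a partition $\mathcal J=\{J_1,\dots,J_k\}$ of $[m]$, $\|B\|_{\mathcal J}:=\sup\{\sum_{\mathbf i\in[n]^m}b_{\mathbf i}\prod_{l=1}^kx^{(l)}_{\mathbf i_{J_l}}:x^{(l)}\in\mathbb{R}^{[n]^{J_l}},\|x^{(l)}\|_2\le1\}$. For a $d$-tensor $A$, $e_q(A)$ is the $qd$-tensor with $(e_q(A))_{i_1\dots i_{qd}}=a_{i_1i_{q+1}\dots i_{(d-1)q+1}}$ if $i_{kq+j}=i_{kq+1}$ for all $k=0,\dots,d-1$, $j=2,\dots,q$, and $0$ otherwise; for a partition $\mathcal J$ of $[qd]$, $\|A\|_{\mathcal J}:=\|e_q(A)\|_{\mathcal J}$. *)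

(* Defs.v *)
From mathcomp Require Import all_boot.
From Stdlib Require Import Reals ClassicalEpsilon.

Set Implicit Arguments.
Unset Strict Implicit.
Unset Printing Implicit Defensive.

(* Supremum of a set of reals (least upper bound if it exists, 0 otherwise). *)
Definition Rsup (S : R -> Prop) : R :=
  match excluded_middle_informative (exists s, is_lub S s) with
  | left H => proj1_sig (constructive_indefinite_description _ H)
  | right _ => 0%R
  end.

Definition index (m n : nat) := {ffun 'I_m -> 'I_n}.
Definition tensor (m n : nat) := index m n -> R.

Definition hadamard (m n : nat) (A B : tensor m n) : tensor m n :=
  fun i => (A i * B i)%R.
Definition indic (m n : nat) (C : {set index m n}) : tensor m n :=
  fun i => if i \in C then 1%R else 0%R.

Definition Lset (d n : nat) (K : {set {set 'I_d}}) : {set index d n} :=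
  [set i : index d n | [forall k : 'I_d, forall l : 'I_d,
      (i k == i l) == [exists S in K, (k \in S) && (l \in S)]]].

Definition restr (m n : nat) (S : {set 'I_m}) (i : index m n)
  : {ffun {k : 'I_m | k \in S} -> 'I_n} :=
  [ffun k => i (val k)].

Definition pnorm (m n : nat) (J : {set {set 'I_m}}) (B : tensor m n) : R :=
  Rsup (fun v => exists x : forall S : {set 'I_m},
                              {ffun {k : 'I_m | k \in S} -> 'I_n} -> R,
          (forall S, S \in J ->
             (sqrt (\big[Rplus/0%R]_(t : {ffun {k : 'I_m | k \in S} -> 'I_n})
                       (x S t * x S t)%R) <= 1)%R) /\
          v = \big[Rplus/0%R]_(i : index m n)
                (B i * \big[Rmult/1%R]_(S in J) x S (restr S i))%R).

(* e_q(A) for a d-tensor A (0-indexed positions p = k*q + j, j < q):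
   (e_q A)_i = a_{(i_{kq})_k} if i is constant on each block
   {kq, ..., kq+q-1}, and 0 otherwise.  Written as a sum over the (for q>0
   unique, if any) j in [n]^d with i_p = j_{p / q} for all p. *)
Definition eq_tensor (q d n : nat) (A : tensor d n) : tensor (q * d) n :=
  fun i => \big[Rplus/0%R]_(a : index d n)
     (if [forall p : 'I_(q * d), forall k : 'I_d,
            (p %/ q == k)%N ==> (i p == a k)]
      then A a else 0%R).

Definition qnorm (q d n : nat) (J : {set {set 'I_(q * d)}}) (A : tensor d n) : R :=
  pnorm J (@eq_tensor q d n A).

(* Main.v *)
Require Import Defs.
From HB Require Import structures.
From mathcomp Require Import all_boot.
From Stdlib Require Import Reals Lra ClassicalEpsilon.

Lemma Rplus_assoc' : associative Rplus. Proof. move=> *; by rewrite Rplus_assoc. Qed.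
Lemma Rmult_assoc' : associative Rmult. Proof. move=> *; by rewrite Rmult_assoc. Qed.
HB.instance Definition _ := Monoid.isComLaw.Build R 0%R Rplus Rplus_assoc' Rplus_comm Rplus_0_l.
HB.instance Definition _ := Monoid.isComLaw.Build R 1%R Rmult Rmult_assoc' Rmult_comm Rmult_1_l.
HB.instance Definition _ := Monoid.isMulLaw.Build R 0%R Rmult Rmult_0_l Rmult_0_r.
HB.instance Definition _ := Monoid.isAddLaw.Build R Rmult Rplus Rmult_plus_distr_r Rmult_plus_distr_l.

Set Implicit Arguments.
Unset Strict Implicit.
Open Scope R_scope.

Lemma sum_le (I : Type) (r : seq I) (P : pred I) (F G : I -> R) :
  (forall i, P i -> F i <= G i) ->
  \big[Rplus/0]_(i <- r | P i) F i <= \big[Rplus/0]_(i <- r | P i) G i.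
Proof.
move=> H; apply: (big_ind2 (fun x y => x <= y)) => //; first lra.
move=> *; lra.
Qed.

Lemma sum_ge0 (I : Type) (r : seq I) (P : pred I) (F : I -> R) :
  (forall i, P i -> 0 <= F i) -> 0 <= \big[Rplus/0]_(i <- r | P i) F i.
Proof.
move=> H; apply: (big_ind (fun x => 0 <= x)) => //; first lra.
move=> *; lra.
Qed.

Lemma prod_abs_le1 (I : Type) (r : seq I) (P : pred I) (F : I -> R) :
  (forall i, P i -> Rabs (F i) <= 1) -> Rabs (\big[Rmult/1]_(i <- r | P i) F i) <= 1.
Proof.
move=> H; apply: (big_ind (fun x => Rabs x <= 1)) => //.
  rewrite Rabs_R1; lra.
move=> x y Hx Hy; rewrite Rabs_mult.
have := Rabs_pos x; have := Rabs_pos y; nra.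
Qed.

Lemma Rsup_lub (S : R -> Prop) :
  (exists v, S v) -> (exists M, forall v, S v -> v <= M) -> is_lub S (Rsup S).
Proof.
move=> [v Sv] [M HM].
rewrite /Rsup; case: excluded_middle_informative => [H|H].
  by case: constructive_indefinite_description.
exfalso; apply: H.
have [m Hm] := completeness S (ex_intro _ M HM) (ex_intro _ v Sv).
by exists m.
Qed.

Lemma pow2_const (n : nat) : \big[Rmult/1]_(w < n) 2 = 2 ^ n.
Proof.
elim: n => [|n IH]; first by rewrite big_ord0.
by rewrite big_ord_recr /= IH Rmult_comm.
Qed.

Definition sgn (b : bool) : R := if b then 1 else -1.

Lemma sumeps (n : nat) (h : 'I_n -> bool -> R) :
  \big[Rplus/0]_(e : {ffun 'I_n -> bool}) \big[Rmult/1]_(w < n) h w (e w)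
  = \big[Rmult/1]_(w < n) (h w true + h w false).
Proof.
rewrite -bigA_distr_bigA; apply: eq_bigr => w _.
by rewrite big_bool.
Qed.

Lemma prod_if1 (n : nat) (u : 'I_n) (F : 'I_n -> R) :
  \big[Rmult/1]_(w < n) (if w == u then F w else 1) = F u.
Proof. by rewrite -big_mkcond big_pred1_eq. Qed.

Lemma sumeps2 (n : nat) (u v : 'I_n) :
  \big[Rplus/0]_(e : {ffun 'I_n -> bool}) (sgn (e u) * sgn (e v))
  = 2 ^ n * (if u == v then 1 else 0).
Proof.
have -> : \big[Rplus/0]_(e : {ffun 'I_n -> bool}) (sgn (e u) * sgn (e v)) =
   \big[Rplus/0]_(e : {ffun 'I_n -> bool}) \big[Rmult/1]_(w < n)
       ((if w == u then sgn (e w) else 1) * (if w == v then sgn (e w) else 1)).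
  apply: eq_bigr => e _; rewrite big_split /=.
  by rewrite (prod_if1 u (fun w => sgn (e w))) (prod_if1 v (fun w => sgn (e w))).
rewrite (sumeps (fun w b => (if w == u then sgn b else 1) * (if w == v then sgn b else 1))).
case: eqP => [->|Huv].
  rewrite -pow2_const Rmult_1_r; apply: eq_bigr => w _.
  by case: (w == v) => /=; lra.
rewrite Rmult_0_r (bigD1 u) //= eqxx.
have -> : (u == v) = false by apply/eqP.
rewrite /=; lra.
Qed.

Definition vec (m n : nat) := forall S : {set 'I_m}, {ffun {k : 'I_m | k \in S} -> 'I_n} -> R.

Definition Xp (m n : nat) (J : {set {set 'I_m}}) (x : vec m n) (i : Defs.index m n) : R :=
  \big[Rmult/1]_(S in J) x S (restr S i).

Definition feasible (m n : nat) (J : {set {set 'I_m}}) (x : vec m n) : Prop :=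
  forall S, S \in J ->
    sqrt (\big[Rplus/0%R]_(t : {ffun {k : 'I_m | k \in S} -> 'I_n}) (x S t * x S t)%R) <= 1.

Definition Val (m n : nat) (J : {set {set 'I_m}}) (B : tensor m n) (x : vec m n) : R :=
  \big[Rplus/0]_(i : Defs.index m n) (B i * Xp J x i).

Lemma sq_le1 (y : R) : Rabs y <= 1 -> y * y <= 1.
Proof. unfold Rabs; destruct (Rcase_abs y); nra. Qed.

Lemma feasible_abs (m n : nat) (J : {set {set 'I_m}}) (x : vec m n) S t :
  feasible J x -> S \in J -> Rabs (x S t) <= 1.
Proof.
move=> Hf HS; have H1 := Hf S HS.
set s := \big[Rplus/0%R]_(t : {ffun {k : 'I_m | k \in S} -> 'I_n}) (x S t * x S t)%R in H1.
have s0 : 0 <= s by apply: sum_ge0 => u _; nra.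
have s1 : s <= 1.
  rewrite -(sqrt_sqrt s s0); have := sqrt_pos s; nra.
have : x S t * x S t <= s.
  rewrite /s (bigD1 t) //=.
  rewrite -{1}[x S t * x S t]Rplus_0_r; apply: Rplus_le_compat_l.
  by apply: sum_ge0 => u _; nra.
move=> h; unfold Rabs; destruct (Rcase_abs (x S t)); nra.
Qed.

Lemma Xp_abs (m n : nat) (J : {set {set 'I_m}}) (x : vec m n) i :
  feasible J x -> Rabs (Xp J x i) <= 1.
Proof. move=> Hf; rewrite /Xp; apply: prod_abs_le1 => S HS; exact: (feasible_abs _ Hf HS). Qed.

Lemma pnorm_set_lub (m n : nat) (J : {set {set 'I_m}}) (B : tensor m n) :
  is_lub (fun v => exists x : vec m n, feasible J x /\ v = Val J B x) (pnorm J B).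
Proof.
apply: Rsup_lub.
  exists (Val J B (fun _ _ => 0)), (fun _ _ => 0); split => // S _.
  rewrite big1 ?sqrt_0; [lra | move=> *; lra].
exists (\big[Rplus/0]_(i : Defs.index m n) Rabs (B i)) => v [x [Hx ->]].
apply: sum_le => i _.
have := Xp_abs i Hx; have := Rabs_pos (B i).
have := Rle_abs (B i * Xp J x i); rewrite Rabs_mult; nra.
Qed.

Lemma Val_le_pnorm (m n : nat) (J : {set {set 'I_m}}) (B : tensor m n) x :
  feasible J x -> Val J B x <= pnorm J B.
Proof. move=> Hx; case: (pnorm_set_lub J B) => H _; apply: H; by exists x. Qed.

Lemma pnorm_le (m n : nat) (J : {set {set 'I_m}}) (B : tensor m n) c :
  (forall x, feasible J x -> Val J B x <= c) -> pnorm J B <= c.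
Proof.
move=> H; case: (pnorm_set_lub J B) => _; apply => v [x [Hx ->]]; exact: H.
Qed.

Definition cons (q d n : nat) (i : Defs.index (q * d) n) (a : Defs.index d n) : bool :=
  [forall p : 'I_(q * d), forall k : 'I_d, (p %/ q == k)%N ==> (i p == a k)].

Definition W (q d n : nat) (J : {set {set 'I_(q * d)}}) (x : vec (q * d) n) (a : Defs.index d n) : R :=
  \big[Rplus/0]_(i : Defs.index (q * d) n) (if cons i a then Xp J x i else 0).

Lemma Val_W (q d n : nat) (J : {set {set 'I_(q * d)}}) (A : tensor d n) x :
  Val J (@eq_tensor q d n A) x = \big[Rplus/0]_(a : Defs.index d n) (A a * W J x a).
Proof.
rewrite /Val /eq_tensor.
under eq_bigr do rewrite big_distrl /=.
rewrite exchange_big /=; apply: eq_bigr => a _.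
rewrite /W big_distrr /=; apply: eq_bigr => i _.
rewrite /cons; case: ifP => _; lra.
Qed.

Lemma kpP (q d : nat) (hq : (leq 1 q)) (k : 'I_d) : leq (muln k q).+1 (muln q d).
Proof. by rewrite mulnC ltn_pmul2l. Qed.

Definition kp (q d : nat) (hq : (leq 1 q)) (k : 'I_d) : 'I_(q * d) := Ordinal (kpP hq k).

Lemma cons_kp (q d n : nat) (hq : (leq 1 q)) (i : Defs.index (q * d) n) (a : Defs.index d n) k :
  cons i a -> i (kp hq k) = a k.
Proof.
move=> /forallP/(_ (kp hq k))/forallP/(_ k)/implyP H; apply/eqP; apply: H.
by rewrite /= mulnK.
Qed.

Definition fS (q d n : nat) (hq : (leq 1 q)) (g : 'I_d -> 'I_n -> R) (S : {set 'I_(q * d)})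
  (t : {ffun {k : 'I_(q * d) | k \in S} -> 'I_n}) : R :=
  \big[Rmult/1]_(k < d)
     oapp (fun s => g k (t s)) 1 (insub (kp hq k) : option {p : 'I_(q * d) | p \in S}).

Lemma fS_restr (q d n : nat) (hq : (leq 1 q)) g S (i : Defs.index (q * d) n) :
  fS hq g (restr S i) =
  \big[Rmult/1]_(k < d) (if kp hq k \in S then g k (i (kp hq k)) else 1).
Proof.
apply: eq_bigr => k _; case: insubP => [s Hs Hv|Hn] /=.
  by rewrite Hs /restr ffunE Hv.
by rewrite (negbTE Hn).
Qed.

Lemma prodJ (q d n : nat) (hq : (leq 1 q)) (J : {set {set 'I_(q * d)}}) g
  (i : Defs.index (q * d) n) :
  partition J [set: 'I_(q * d)] ->
  \big[Rmult/1]_(S in J) fS hq g (restr S i) = \big[Rmult/1]_(k < d) g k (i (kp hq k)).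
Proof.
case/and3P => /eqP cJ tJ _.
under eq_bigr do rewrite fS_restr.
rewrite exchange_big /=; apply: eq_bigr => k _.
have kc : kp hq k \in cover J by rewrite cJ inE.
rewrite (bigD1 (pblock J (kp hq k))) /=; last exact: pblock_mem.
rewrite mem_pblock kc big1 ?Rmult_1_r // => S /andP [HS HSn].
case: ifP => // kS; exfalso; move/negP: HSn; apply.
by rewrite (def_pblock tJ HS kS).
Qed.

Lemma absorb (q d n : nat) (hq : (leq 1 q)) (J : {set {set 'I_(q * d)}}) (x : vec (q * d) n)
  (g : 'I_d -> 'I_n -> R) :
  partition J [set: 'I_(q * d)] ->
  feasible J x -> (forall k v, Rabs (g k v) <= 1) ->
  exists x', feasible J x' /\
    forall a, W J x' a = (\big[Rmult/1]_(k < d) g k (a k)) * W J x a.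
Proof.
move=> pJ Hx Hg.
exists (fun S t => x S t * fS hq g t); split.
  move=> S HS; apply: Rle_trans (Hx S HS); apply: sqrt_le_1_alt.
  apply: sum_le => t _.
  have : Rabs (fS hq g t) <= 1.
    apply: prod_abs_le1 => k _; case: insubP => [s _ _|_] /=; first exact: Hg.
    rewrite Rabs_R1; lra.
  move/sq_le1 => h; have := Rle_0_sqr (x S t); rewrite /Rsqr; nra.
move=> a; rewrite /W big_distrr /=; apply: eq_bigr => i _.
case: ifP => c; last lra.
rewrite /Xp big_split /= (prodJ _ _ _ pJ).
rewrite Rmult_comm; congr (_ * _); apply: eq_bigr => k _.
by rewrite (cons_kp hq k c).
Qed.

Lemma sum_opp (I : Type) (r : seq I) (P : pred I) (F : I -> R) :
  \big[Rplus/0]_(i <- r | P i) (- F i) = - \big[Rplus/0]_(i <- r | P i) F i.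
Proof.
symmetry; apply: (big_morph (fun y => - y)); last by rewrite Ropp_0.
by move=> a b; rewrite Ropp_plus_distr.
Qed.

Definition ee (d n : nat) (p : 'I_d * 'I_d) (a : Defs.index d n) : R :=
  if a p.1 == a p.2 then 1 else 0.

Definition Pg (d n : nat) (g : 'I_d -> 'I_n -> R) (a : Defs.index d n) : R :=
  \big[Rmult/1]_(k < d) g k (a k).

Definition bnd (d n : nat) (g : 'I_d -> 'I_n -> R) := forall k v, Rabs (g k v) <= 1.

Definition VV (q d n : nat) (J : {set {set 'I_(q * d)}}) (A : tensor d n) (x : vec (q * d) n)
  (B : tensor d n) : R :=
  \big[Rplus/0]_(a : Defs.index d n) (A a * B a * W J x a).

Definition Good (q d n : nat) (J : {set {set 'I_(q * d)}}) (A : tensor d n) (x : vec (q * d) n)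
  (w : R) (D : tensor d n) : Prop :=
  forall g, bnd g -> VV J A x (fun a => D a * Pg g a) <= w * qnorm J A.

Lemma VV_ext (q d n : nat) (J : {set {set 'I_(q * d)}}) (A : tensor d n) x (B B' : tensor d n) :
  (forall a, B a = B' a) -> VV J A x B = VV J A x B'.
Proof. by move=> H; apply: eq_bigr => a _; rewrite H. Qed.

Lemma Good_ext (q d n : nat) (J : {set {set 'I_(q * d)}}) (A : tensor d n) x w (D D' : tensor d n) :
  (forall a, D a = D' a) -> Good J A x w D -> Good J A x w D'.
Proof.
move=> H G g hg; have := G g hg; apply: Rle_trans; apply: Req_le.
by apply: VV_ext => a; rewrite H.
Qed.

Lemma G0 (q d n : nat) (hq : leq 1 q) (J : {set {set 'I_(q * d)}}) (A : tensor d n) x :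
  partition J [set: 'I_(q * d)] -> feasible J x -> Good J A x 1 (fun _ => 1).
Proof.
move=> pJ Hx g hg.
have [x' [Hx' HW]] := absorb hq pJ Hx hg.
have := Val_le_pnorm (@eq_tensor q d n A) Hx'.
rewrite Val_W Rmult_1_l /qnorm => H; apply: Rle_trans H; apply: Req_le.
apply: eq_bigr => a _; rewrite HW /Pg; ring.
Qed.

Lemma sum_const1 (n : nat) : \big[Rplus/0]_(e : {ffun 'I_n -> bool}) 1 = 2 ^ n.
Proof.
have := sumeps (fun (_ : 'I_n) (_ : bool) => 1).
under eq_bigr do rewrite big1_eq.
move=> ->; rewrite -pow2_const; apply: eq_bigr => *; lra.
Qed.

Lemma Geq (q d n : nat) (J : {set {set 'I_(q * d)}}) (A : tensor d n) x w (D : tensor d n) p :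
  Good J A x w D -> Good J A x w (fun a => D a * ee p a).
Proof.
move=> G g hg.
pose ge (e : {ffun 'I_n -> bool}) j v :=
  g j v * (if j == p.1 then sgn (e v) else 1) * (if j == p.2 then sgn (e v) else 1).
have hge : forall e, bnd (ge e).
  move=> e j v; rewrite /ge !Rabs_mult.
  have h1 : forall b, Rabs (if b then sgn (e v) else 1) = 1.
    by case; rewrite ?Rabs_R1 //; case: (e v); rewrite /sgn ?Rabs_R1 ?Rabs_Ropp ?Rabs_R1.
  rewrite !h1; have := hg j v; lra.
have Pge : forall e a, Pg (ge e) a = Pg g a * sgn (e (a p.1)) * sgn (e (a p.2)).
  move=> e a; rewrite /Pg /ge !big_split /=.
  by rewrite (prod_if1 p.1 (fun w => sgn (e (a w)))) (prod_if1 p.2 (fun w => sgn (e (a w)))).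
have key : 2 ^ n * VV J A x (fun a => D a * ee p a * Pg g a) =
   \big[Rplus/0]_(e : {ffun 'I_n -> bool}) VV J A x (fun a => D a * Pg (ge e) a).
  rewrite /VV exchange_big /= big_distrr /=; apply: eq_bigr => a _.
  under eq_bigr do rewrite Pge.
  have -> : \big[Rplus/0]_(e : {ffun 'I_n -> bool})
       (A a * (D a * (Pg g a * sgn (e (a p.1)) * sgn (e (a p.2)))) * W J x a)
     = (A a * D a * Pg g a * W J x a) *
       \big[Rplus/0]_(e : {ffun 'I_n -> bool}) (sgn (e (a p.1)) * sgn (e (a p.2))).
    rewrite big_distrr /=; apply: eq_bigr => e _; ring.
  rewrite sumeps2 /ee; ring.
have hle : \big[Rplus/0]_(e : {ffun 'I_n -> bool}) VV J A x (fun a => D a * Pg (ge e) a)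
    <= 2 ^ n * (w * qnorm J A).
  rewrite -sum_const1 big_distrl /=; apply: sum_le => e _; rewrite Rmult_1_l; exact: G.
have h2 : 0 < 2 ^ n by apply: pow_lt; lra.
rewrite -key in hle.
have := Rmult_le_reg_l _ _ _ h2 hle.
by apply: Rle_trans; apply: Req_le; apply: VV_ext => a; ring.
Qed.

Lemma Gneg (q d n : nat) (J : {set {set 'I_(q * d)}}) (A : tensor d n) x w (D : tensor d n)
  (u : 'I_d) g :
  Good J A x w D -> bnd g -> - VV J A x (fun a => D a * Pg g a) <= w * qnorm J A.
Proof.
move=> G hg.
pose g' j v := g j v * (if j == u then -1 else 1).
have hg' : bnd g'.
  move=> j v; rewrite /g' Rabs_mult; case: (j == u);
    rewrite ?Rabs_Ropp Rabs_R1 Rmult_1_r; exact: hg.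
have := G g' hg'; apply: Rle_trans; apply: Req_le.
rewrite /VV -sum_opp; apply: eq_bigr => a _.
rewrite /Pg /g' big_split /= (prod_if1 u (fun _ => -1)); ring.
Qed.

Lemma Gpair (q d n : nat) (J : {set {set 'I_(q * d)}}) (A : tensor d n) x w (D : tensor d n) p :
  Good J A x w D -> Good J A x (2 * w) (fun a => D a * (1 - ee p a)).
Proof.
move=> G g hg.
have h1 := G g hg.
have h2 := Gneg p.1 (Geq p G) hg.
have -> : VV J A x (fun a => D a * (1 - ee p a) * Pg g a) =
   VV J A x (fun a => D a * Pg g a) + - VV J A x (fun a => D a * ee p a * Pg g a).
  rewrite /VV -sum_opp -big_split /=; apply: eq_bigr => a _; ring.
lra.
Qed.

Lemma GeqL (q d n : nat) (J : {set {set 'I_(q * d)}}) (A : tensor d n) x w (D : tensor d n) ps :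
  Good J A x w D -> Good J A x w (fun a => D a * \big[Rmult/1]_(p <- ps) ee p a).
Proof.
elim: ps D => [|p ps IH] D G.
  by apply: Good_ext G => a; rewrite big_nil Rmult_1_r.
apply: Good_ext (IH _ (Geq p G)) => a; rewrite big_cons; ring.
Qed.

Lemma GpairL (q d n : nat) (J : {set {set 'I_(q * d)}}) (A : tensor d n) x w (D : tensor d n) ps :
  Good J A x w D ->
  Good J A x (2 ^ size ps * w) (fun a => D a * \big[Rmult/1]_(p <- ps) (1 - ee p a)).
Proof.
elim: ps w D => [|p ps IH] w D G.
  rewrite /= Rmult_1_l; apply: Good_ext G => a; by rewrite big_nil Rmult_1_r.
have := IH _ _ (Gpair p G); rewrite /= -Rmult_assoc (Rmult_comm _ 2).
by apply: Good_ext => a; rewrite big_cons; ring.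
Qed.

Close Scope R_scope.

Fixpoint pairs (T : Type) (s : seq T) : seq (T * T) :=
  match s with
  | [::] => [::]
  | x :: s' => map (fun y => (x, y)) s' ++ pairs s'
  end.

Lemma size_pairs (T : Type) (s : seq T) : size (pairs s) = 'C(size s, 2).
Proof.
elim: s => [|x s IH] //=.
by rewrite size_cat size_map IH binS bin1 addnC.
Qed.

Lemma pairs_mem (T : eqType) (s : seq T) x y :
  uniq s -> (x, y) \in pairs s -> [/\ x \in s, y \in s & x != y].
Proof.
elim: s => [|z s IH] //= /andP [zs us].
rewrite mem_cat => /orP [/mapP [w ws [-> ->]]|/(IH us) [h1 h2 h3]].
  rewrite !inE eqxx ws orbT; split => //; apply/eqP => E; move: zs; by rewrite E ws.
by rewrite !inE h1 h2 !orbT.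
Qed.

Lemma mem_pairs (T : eqType) (s : seq T) x y :
  x \in s -> y \in s -> x != y -> ((x, y) \in pairs s) || ((y, x) \in pairs s).
Proof.
elim: s => [|z s IH] //=.
rewrite !inE !mem_cat => /orP [/eqP ->|xs] /orP [/eqP ->|ys] nxy.
- by rewrite eqxx in nxy.
- by apply/orP; left; apply/orP; left; apply/mapP; exists y.
- by apply/orP; right; apply/orP; left; apply/mapP; exists x.
- by have /orP [->|->] := IH xs ys nxy; rewrite !orbT.
Qed.

Section Reps.
Variables (d : nat) (K : {set {set 'I_d}}).
Hypothesis pK : partition K [set: 'I_d].

Definition rep (k : 'I_d) : 'I_d := odflt k [pick l in pblock K k].

Lemma coverK k : k \in cover K.
Proof. by case/and3P: pK => /eqP -> _ _; rewrite inE. Qed.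

Lemma trivK : trivIset K.
Proof. by case/and3P: pK. Qed.

Lemma rep_in k : rep k \in pblock K k.
Proof.
rewrite /rep; case: pickP => [l //|H].
by move: (H k); rewrite /= mem_pblock coverK.
Qed.

Lemma pblock_rep k : pblock K (rep k) = pblock K k.
Proof. exact: def_pblock trivK (pblock_mem (coverK k)) (rep_in k). Qed.

Lemma rep_eq k l : pblock K k = pblock K l -> rep k = rep l.
Proof.
move=> H; rewrite /rep H; case: pickP => [//|H0].
by move: (H0 l); rewrite /= mem_pblock coverK.
Qed.

Lemma rep_rep k : rep (rep k) = rep k.
Proof. by apply: rep_eq; rewrite pblock_rep. Qed.

Lemma sameblock k l :
  [exists S in K, (k \in S) && (l \in S)] = (pblock K k == pblock K l).
Proof.
apply/idP/idP.
  case/existsP => S /and3P [SK kS lS].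
  by rewrite (def_pblock trivK SK kS) (def_pblock trivK SK lS).
move/eqP => H; apply/existsP; exists (pblock K k).
by rewrite pblock_mem ?coverK // mem_pblock coverK H mem_pblock coverK.
Qed.

Definition Rset : {set 'I_d} := [set rep k | k in [set: 'I_d]].

Lemma card_Rset : #|Rset| = #|K|.
Proof.
have inj : {in Rset &, injective (pblock K)}.
  move=> x y /imsetP [k _ ->] /imsetP [l _ ->] H.
  by rewrite -rep_rep -[rep l]rep_rep; apply: rep_eq.
rewrite -(card_in_imset inj); apply: eq_card => B; apply/imsetP/idP.
  by case=> x _ ->; apply: pblock_mem; exact: coverK.
move=> BK; have : B != set0.
  apply/eqP => E; case/and3P: pK => _ _; by rewrite -E BK.
case/set0Pn => k kB; exists (rep k); first by apply/imsetP; exists k.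
by rewrite pblock_rep (def_pblock trivK BK kB).
Qed.

Definition Rs := enum Rset.
Definition Eps := [seq (k, rep k) | k <- enum 'I_d].

Lemma size_pairs_Rs : size (pairs Rs) = (#|K| * (#|K|).-1) %/ 2.
Proof. by rewrite size_pairs /Rs -cardE card_Rset bin2 divn2. Qed.

Lemma Lset_char (n : nat) (a : Defs.index d n) :
  (a \in Lset n K) =
  all (fun p => a p.1 == a p.2) Eps && all (fun p => a p.1 != a p.2) (pairs Rs).
Proof.
rewrite inE; apply/idP/idP.
  move=> H.
  have HL : forall k l, (a k == a l) = (pblock K k == pblock K l).
    move=> k l; move/forallP: H => /(_ k) /forallP /(_ l) /eqP ->.
    exact: sameblock.
  apply/andP; split.
    apply/allP => p /mapP [k _ ->] /=; by rewrite HL pblock_rep.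
  apply/allP => [[x y]] /(pairs_mem (enum_uniq _)) [].
  rewrite !mem_enum => /imsetP [k _ ->] /imsetP [l _ ->] nxy /=.
  rewrite HL; apply: contra nxy => /eqP E.
  by rewrite -rep_rep -[rep l]rep_rep (rep_eq E).
case/andP => /allP E /allP Q.
have Ek : forall k, a k = a (rep k).
  move=> k; apply/eqP; apply: (E (k, rep k)); apply/mapP; exists k => //.
  by rewrite mem_enum.
apply/forallP => k; apply/forallP => l; rewrite sameblock.
case: (eqVneq (pblock K k) (pblock K l)) => [H|H].
  by rewrite Ek (rep_eq H) -Ek eqxx.
have nr : rep k != rep l.
  by apply: contra H => /eqP E'; rewrite -pblock_rep E' pblock_rep.
have mk : rep k \in Rs by rewrite mem_enum; apply/imsetP; exists k.
have ml : rep l \in Rs by rewrite mem_enum; apply/imsetP; exists l.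
rewrite Ek [a l]Ek.
have /orP [P1|P1] := mem_pairs mk ml nr.
  by have := Q _ P1 => /= /negbTE ->.
by have := Q _ P1 => /=; rewrite eq_sym => /negbTE ->.
Qed.

End Reps.

Lemma prod01 (T : Type) (r : seq T) (b : T -> bool) :
  \big[Rmult/1%R]_(p <- r) (if b p then 1%R else 0%R) = if all b r then 1%R else 0%R.
Proof.
elim: r => [|p r IH]; first by rewrite big_nil.
rewrite big_cons IH /=; case: (b p); case: (all b r) => /=; ring.
Qed.

Lemma indic_decomp (d n : nat) (K : {set {set 'I_d}}) (pK : partition K [set: 'I_d])
  (a : Defs.index d n) :
  indic (Lset n K) a =
  ((1 * \big[Rmult/1%R]_(p <- Eps K) ee p a) *
     \big[Rmult/1%R]_(p <- pairs (Rs K)) (1 - ee p a))%R.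
Proof.
rewrite /indic (Lset_char pK) /ee prod01.
have -> : \big[Rmult/1%R]_(p <- pairs (Rs K))
     (1 - (if a p.1 == a p.2 then 1 else 0))%R =
   \big[Rmult/1%R]_(p <- pairs (Rs K)) (if a p.1 != a p.2 then 1 else 0)%R.
  by apply: eq_bigr => p _; case: (a p.1 == a p.2) => /=; ring.
rewrite prod01; case: all; case: all => /=; ring.
Qed.

Theorem lemma5p2 (n q d : nat) (J : {set {set 'I_(q * d)}})
  (K : {set {set 'I_d}}) (A : tensor d n) :
  (0 < q)%N ->
  partition J [set: 'I_(q * d)] ->
  partition K [set: 'I_d] ->
  (qnorm J (hadamard A (indic (@Lset d n K)))
     <= 2 ^ ((#|K| * (#|K|).-1) %/ 2) * qnorm J A)%R.
Proof.
move=> hq pJ pK.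
rewrite /qnorm; apply: pnorm_le => x Hx.
have G := GpairL (pairs (Rs K)) (GeqL (Eps K) (@G0 q d n hq J A x pJ Hx)).
have b1 : bnd (fun (_ : 'I_d) (_ : 'I_n) => 1%R).
  by move=> *; rewrite Rabs_R1; apply: Rle_refl.
have := G _ b1.
rewrite Val_W Rmult_1_r (size_pairs_Rs pK) /qnorm.
apply: Rle_trans; apply: Req_le; apply: eq_bigr => a _.
rewrite /hadamard (indic_decomp pK a) /Pg big1_eq Rmult_1_r; reflexivity.
Qed.
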